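(* Let $E$ be a finite set and let $\mathcal{Q}\subseteq 2^E$ be a weakly Rayleigh set-system. If $\varnothing\in\mathcal{Q}$ and $E\in\mathcal{Q}$, then $\mathcal{Q}=2^E$.
   Context: For $\omega:2^E\to[0,\infty)$ not identically zero, $Z(\omega;\mathbf{y})=\sum_{S\subseteq E}\omega(S)\prod_{e\in S}y_e$. With $Z_e=\partial Z/\partial y_e$, $Z_{ef}=\partial^2Z/\partial y_e\partial y_f$, $\Delta Z\{e,f\}=Z_eZ_f-Z_{ef}Z$, $Z$ is Rayleigh if $\Delta Z\{e,f\}(\mathbf{y})\ge0$ for all distinct $e,f$ and all $\mathbf{y}$ with all $y_c>0$. $\mathcal{Q}$ is weakly Rayleigh if there is $\omega\ge0$ with $\{S:\omega(S)>0\}=\mathcal{Q}$ and $Z(\omega;\mathbf{y})$ Rayleigh. *)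

(* Defs.v *)
From HB Require Import structures.
From mathcomp Require Import all_boot all_order all_algebra.
From mathcomp Require Import reals.
Set Implicit Arguments. Unset Strict Implicit. Unset Printing Implicit Defensive.
Import Order.TTheory GRing.Theory Num.Theory.
Local Open Scope ring_scope.

Section Rayleigh.
Variables (R : realType) (E : finType).

Definition Zpoly (w : {set E} -> R) (y : E -> R) : R :=
  \sum_(S : {set E}) w S * \prod_(e in S) y e.

(* partial derivative dZ/dy_e of the multiaffine polynomial Z (term-wise) *)
Definition Zd1 (w : {set E} -> R) (e : E) (y : E -> R) : R :=
  \sum_(S : {set E} | e \in S) w S * \prod_(c in S :\ e) y c.

(* second partial derivative d^2Z/dy_e dy_f, e <> f (term-wise) *)
Definition Zd2 (w : {set E} -> R) (e f : E) (y : E -> R) : R :=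
  \sum_(S : {set E} | (e \in S) && (f \in S)) w S * \prod_(c in S :\ e :\ f) y c.

Definition DeltaZ (w : {set E} -> R) (e f : E) (y : E -> R) : R :=
  Zd1 w e y * Zd1 w f y - Zd2 w e f y * Zpoly w y.

Definition rayleigh (w : {set E} -> R) : Prop :=
  forall e f : E, e != f -> forall y : E -> R, (forall c, 0 < y c) ->
    0 <= DeltaZ w e f y.

Definition weakly_rayleigh (Q : {set {set E}}) : Prop :=
  exists w : {set E} -> R,
    [/\ forall S, 0 <= w S,
        exists S, w S != 0,
        forall S, (0 < w S) <-> S \in Q
      & rayleigh w].
End Rayleigh.

(* Main.v *)
Require Import Defs.
From HB Require Import structures.
From mathcomp Require Import all_boot all_order all_algebra.
From mathcomp Require Import reals.
From mathcomp Require Import ring lra zify.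
Set Implicit Arguments. Unset Strict Implicit. Unset Printing Implicit Defensive.
Import Order.TTheory GRing.Theory Num.Theory.
Local Open Scope ring_scope.

Section Work.
Variables (R : realType) (E : finType) (w : {set E} -> R).
Variables (e f : E) (y : E -> R).
Hypothesis ef : e != f.

Let g (S : {set E}) := w S * \prod_(c in S :\ e :\ f) y c.
Definition P00 := \sum_(S : {set E} | (e \notin S) && (f \notin S)) g S.
Definition P10 := \sum_(S : {set E} | (e \in S) && (f \notin S)) g S.
Definition P01 := \sum_(S : {set E} | (e \notin S) && (f \in S)) g S.
Definition P11 := \sum_(S : {set E} | (e \in S) && (f \in S)) g S.

Lemma setD_notin (S : {set E}) a : a \notin S -> S :\ a = S.
Proof.
move=> aS; apply/setP => c; rewrite !inE; case: eqVneq => // ->.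
by rewrite (negbTE aS).
Qed.

Lemma prodS (S : {set E}) : \prod_(c in S) y c =
  (if e \in S then y e else 1) * (if f \in S then y f else 1) *
  \prod_(c in S :\ e :\ f) y c.
Proof.
case eS: (e \in S); case fS: (f \in S).
- rewrite (big_setD1 e) //= (big_setD1 f) ?mulrA //.
  by rewrite !inE eq_sym ef fS.
- rewrite (big_setD1 e) //= mulr1; congr (_ * _).
  by rewrite (setD_notin (a:=f)) // !inE fS andbF.
- rewrite (big_setD1 f) //= mul1r (setD_notin (a:=e)) ?eS //.
- by rewrite !mul1r !setD_notin ?eS ?fS // !inE eS andbF.
Qed.

Lemma Zpoly_dec : Zpoly w y = P00 + y e * P10 + y f * P01 + y e * y f * P11.
Proof.
rewrite /Zpoly /P00 /P10 /P01 /P11 !(big_mkcond (fun S => _ && _)) !mulr_sumr.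
rewrite -!big_split /=. apply: eq_bigr => S _.
rewrite prodS /g; case: (e \in S); case: (f \in S) => /=; ring.
Qed.

Lemma Zd1e_dec : Zd1 w e y = P10 + y f * P11.
Proof.
rewrite /Zd1 /P10 /P11 [LHS]big_mkcond !(big_mkcond (fun S => _ && _)) mulr_sumr.
rewrite -!big_split /=. apply: eq_bigr => S _.
case eS: (e \in S) => /=; last by rewrite mulr0 addr0.
case fS: (f \in S) => /=.
  rewrite /g (big_setD1 f) /= ?mulrA; last by rewrite !inE eq_sym ef.
  rewrite add0r; ring.
by rewrite mulr0 addr0 /g (setD_notin (a:=f)) // !inE fS andbF.
Qed.

Lemma Zd1f_dec : Zd1 w f y = P01 + y e * P11.
Proof.
rewrite /Zd1 /P01 /P11 [LHS]big_mkcond !(big_mkcond (fun S => _ && _)) mulr_sumr.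
rewrite -!big_split /=. apply: eq_bigr => S _.
case fS: (f \in S) => /=; last by rewrite !andbF mulr0 addr0.
rewrite /g.
have -> : S :\ e :\ f = S :\ f :\ e.
  by apply/setP => c; rewrite !inE; case: (c == e); case: (c == f).
case eS: (e \in S) => /=.
  rewrite (big_setD1 e (A := S :\ f)) /= ?mulrA; last by rewrite !inE ef.
  rewrite add0r; ring.
by rewrite mulr0 addr0 (setD_notin (a:=e) (S := S :\ f)) // !inE eS andbF.
Qed.

Lemma Delta_dec : DeltaZ w e f y = P10 * P01 - P11 * P00.
Proof.
rewrite /DeltaZ Zd1e_dec Zd1f_dec Zpoly_dec.
have -> : Zd2 w e f y = P11 by [].
ring.
Qed.
End Work.

Section Core.
Variables (R : realType) (E : finType) (w : {set E} -> R).
Hypothesis Hw : forall S, 0 <= w S.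

Lemma prod_exprz (K : R) (x : E -> int) (T : {set E}) : K != 0 ->
  \prod_(c in T) K ^ (x c) = K ^ (\sum_(c in T) x c).
Proof.
move=> K0; elim/big_rec2: _ => [|i a b _ ->]; first by rewrite expr0z.
by rewrite expfzDr.
Qed.

Lemma sum_sub (p : pred {set E}) : \sum_(S | p S) w S <= \sum_S w S.
Proof.
rewrite [X in _ <= X](bigID p) /= lerDl; apply: sumr_ge0 => S _; exact: Hw.
Qed.

Lemma upper (K : R) (x : E -> int) e f (p : pred {set E}) (q : int) :
  1 <= K ->
  (forall S, p S -> 0 < w S -> \sum_(c in S :\ e :\ f) x c <= q) ->
  \sum_(S | p S) w S * \prod_(c in S :\ e :\ f) K ^ (x c) <= (\sum_S w S) * K ^ q.
Proof.
move=> K1 H.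
have K0 : K != 0 by apply/eqP => K0; rewrite K0 ler10 in K1.
apply: (@le_trans _ _ (\sum_(S | p S) w S * K ^ q)).
  apply: ler_sum => S pS; rewrite prod_exprz //.
  have := Hw S; rewrite le0r => /orP [/eqP ->| wS]; first by rewrite !mul0r.
  by rewrite ler_wpM2l ?Hw // ler_weXz2l // H.
rewrite -mulr_suml ler_wpM2r ?sum_sub // exprz_ge0 //.
by apply: le_trans K1.
Qed.

Lemma lower (K : R) (x : E -> int) e f (p : pred {set E}) (T : {set E}) :
  0 < K -> p T ->
  w T * K ^ (\sum_(c in T :\ e :\ f) x c) <=
  \sum_(S | p S) w S * \prod_(c in S :\ e :\ f) K ^ (x c).
Proof.
move=> K0 pT; rewrite (bigD1 T) //= prod_exprz ?gt_eqF // lerDl.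
apply: sumr_ge0 => S _; apply: mulr_ge0 => //; apply: prodr_ge0 => c _.
exact: exprz_ge0 (ltW K0).
Qed.

Lemma core (Hray : rayleigh w) e f (ef : e != f) (x : E -> int)
  (T1 T2 : {set E}) (qe qf : int) :
  e \notin T1 -> f \notin T1 -> e \in T2 -> f \in T2 -> 0 < w T1 -> 0 < w T2 ->
  (forall S : {set E}, e \in S -> f \notin S -> 0 < w S -> \sum_(c in S :\ e :\ f) x c <= qe) ->
  (forall S : {set E}, e \notin S -> f \in S -> 0 < w S -> \sum_(c in S :\ e :\ f) x c <= qf) ->
  qe + qf < \sum_(c in T1 :\ e :\ f) x c + \sum_(c in T2 :\ e :\ f) x c -> False.
Proof.
move=> eT1 fT1 eT2 fT2 w1 w2 He Hf Hlt.
set W := \sum_(S : {set E}) w S.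
have W0 : 0 <= W by apply: sumr_ge0 => S _.
set c1 := w T1 * w T2.
have c10 : 0 < c1 by apply: mulr_gt0.
set K : R := W ^+ 2 / c1 + 1.
have K1 : 1 <= K by rewrite lerDr divr_ge0 // ?exprn_ge0 // ltW.
have K0 : 0 < K by apply: lt_le_trans K1.
set y := fun c => K ^ (x c).
have ypos : forall c, 0 < y c by move=> c; apply: exprz_gt0.
have := Hray e f ef y ypos; rewrite Delta_dec // subr_ge0 => Hd.
set s1 := \sum_(c in T1 :\ e :\ f) x c.
set s2 := \sum_(c in T2 :\ e :\ f) x c.
have L00 : w T1 * K ^ s1 <= P00 w e f y.
  by rewrite /P00; apply: (lower x e f (p := fun S => (e \notin S) && (f \notin S)) K0); rewrite /= eT1 fT1.
have L11 : w T2 * K ^ s2 <= P11 w e f y.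
  by rewrite /P11; apply: (lower x e f (p := fun S => (e \in S) && (f \in S)) K0); rewrite /= eT2 fT2.
have U10 : P10 w e f y <= W * K ^ qe.
  by apply: upper => // S /andP [] ? ? ?; apply: He.
have U01 : P01 w e f y <= W * K ^ qf.
  by apply: upper => // S /andP [] ? ? ?; apply: Hf.
have Kq0 : 0 < K ^ (qe + qf) by apply: exprz_gt0.
have KK0 : K != 0 by rewrite gt_eqF.
have H1 : c1 * (K ^ (qe + qf) * K) <= W ^+ 2 * K ^ (qe + qf).
  apply: (@le_trans _ _ (c1 * K ^ (s1 + s2))).
    apply: ler_wpM2l; first exact: ltW.
    rewrite -[X in _ * X]expr1z -expfzDr //.
    by apply: ler_weXz2l => //; rewrite lezD1.
  apply: (@le_trans _ _ (P11 w e f y * P00 w e f y)).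
    rewrite expfzDr // /c1 mulrACA mulrC.
    apply: ler_pM => //; apply: mulr_ge0; [exact: ltW | exact: exprz_ge0 (ltW K0)|exact: ltW | exact: exprz_ge0 (ltW K0)].
  apply: (le_trans Hd).
  rewrite expfzDr // expr2 mulrACA.
  apply: ler_pM => //.
    apply: sumr_ge0 => S _; apply: mulr_ge0 => //; apply: prodr_ge0 => c _; exact: ltW.
  apply: sumr_ge0 => S _; apply: mulr_ge0 => //; apply: prodr_ge0 => c _; exact: ltW.
have : c1 * K <= W ^+ 2.
  by rewrite -(ler_pM2r Kq0) mulrAC -mulrA.
rewrite /K mulrDr mulr1 mulrC divfK ?gt_eqF //.
lra.
Qed.
End Core.



Section Weights.
Variable E : finType.
Variables (A B : {set E}) (N : nat).
Definition xw (c : E) : int :=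
  if c \in A then N%:Z else if c \in B then -1 else - N%:Z.

Lemma X_pos (T : {set E}) : \sum_(c in T) xw c <= (N * #|T :&: A|)%N%:Z.
Proof.
rewrite (big_setID A) /=.
have -> : \sum_(i in T :&: A) xw i = \sum_(i in T :&: A) N%:Z.
  by apply: eq_bigr => c; rewrite inE /xw => /andP [_ ->].
rewrite sumr_const pmulrn mulrzz -[X in _ <= X]addr0 lerD //.
apply: sumr_le0 => c; rewrite !inE /xw => /andP [/negbTE -> _].
by case: (c \in B); rewrite ?oppr_le0.
Qed.

Lemma X3 (T : {set E}) : \sum_(c in T) xw c <= (N * #|A|)%N%:Z.
Proof.
apply: (le_trans (X_pos T)); rewrite lez_nat leq_mul2l subset_leq_card ?orbT //.
exact: subsetIr.
Qed.

Lemma X1 (T : {set E}) : A \subset T -> T \subset B ->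
  \sum_(c in T) xw c = (N * #|A|)%N%:Z - #|T :\: A|%:Z.
Proof.
move=> AT TB; rewrite (big_setID A) /= (setIidPr AT).
have -> : \sum_(i in A) xw i = \sum_(i in A) N%:Z.
  by apply: eq_bigr => c; rewrite /xw => ->.
have -> : \sum_(i in T :\: A) xw i = \sum_(i in T :\: A) (-1).
  apply: eq_bigr => c; rewrite !inE /xw => /andP [/negbTE -> cT].
  by rewrite (subsetP TB).
rewrite !sumr_const !pmulrn !mulrzz; lia.
Qed.

Lemma X2a (T : {set E}) a0 : a0 \in A -> a0 \notin T ->
  \sum_(c in T) xw c <= (N * #|A|)%N%:Z - N%:Z.
Proof.
move=> aA aT; apply: (le_trans (X_pos T)).
have : (#|T :&: A| <= #|A :\ a0|)%N.
  apply: subset_leq_card; apply/subsetP => c; rewrite !inE => /andP [cT ->].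
  by rewrite andbT; apply: contraNneq aT => <-.
rewrite [#|A|](cardsD1 a0) aA /= => H.
have : (N * #|T :&: A| <= N * #|A :\ a0|)%N by rewrite leq_mul2l H orbT.
lia.
Qed.

Lemma X2b (T : {set E}) b0 : A \subset B -> b0 \in T -> b0 \notin B ->
  \sum_(c in T) xw c <= (N * #|A|)%N%:Z - N%:Z.
Proof.
move=> AB bT bB; rewrite (big_setD1 b0) //=.
have -> : xw b0 = - N%:Z.
  rewrite /xw (negbTE bB); case: ifP => // bA.
  by move: bB; rewrite (subsetP AB).
have := X3 (T :\ b0).
by move=> H; rewrite addrC lerD2r.
Qed.
End Weights.



Lemma ar_he (k a T S t1 : nat) : (a <= S)%N -> (a <= T)%N -> k = (S - a)%N -> (S <= T)%N ->
  t1 = ((T - a) - 1)%N ->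
  (k * a)%N%:Z - t1%:Z <= (k * a)%N%:Z - k%:Z + 1.
Proof. lia. Qed.

Lemma ar_x2 (k a : nat) : (k * a)%N%:Z - k%:Z <= (k * a)%N%:Z - k%:Z + 1.
Proof. lia. Qed.

Lemma ar_lt (k a t : nat) : (2 <= k)%N -> t = (k - 2)%N ->
  (k * a)%N%:Z - k%:Z + 1 + ((k * a)%N%:Z - k%:Z + 1) <
  (k * a)%N%:Z - 0%N%:Z + ((k * a)%N%:Z - t%:Z).
Proof. lia. Qed.

Lemma ar_c (t a m : nat) : (t - a)%N = (1 + m)%N -> m = (t - a - 1)%N.
Proof. lia. Qed.

Section Main.
Variables (R : realType) (E : finType) (w : {set E} -> R).
Hypothesis Hw : forall S, 0 <= w S.
Hypothesis Hray : rayleigh w.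

Lemma setDDC (S : {set E}) (a b : E) : S :\ a :\ b = S :\ b :\ a.
Proof. by apply/setP => c; rewrite !inE; case: (c == a); case: (c == b). Qed.

Lemma L_rule (A : {set E}) e f : e != f -> e \notin A -> f \notin A ->
  0 < w A -> 0 < w (e |: (f |: A)) -> 0 < w (f |: A).
Proof.
move=> ef eA fA wA wT; case: (boolP (0 < w (f |: A))) => // Hn; exfalso.
have T2E : (e |: (f |: A)) :\ e :\ f = A.
  apply/setP => c; rewrite !inE; case: eqVneq => [->|cf] /=; first by rewrite (negbTE fA).
  by case: eqVneq => [->|] //=; rewrite (negbTE eA).
have T1E : A :\ e :\ f = A by rewrite !setD_notin // !inE fA andbF.
apply: (core Hw Hray ef (x := xw A A 1) (T1 := A) (T2 := e |: (f |: A))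
   (qe := (1 * #|A|)%N%:Z) (qf := (1 * #|A|)%N%:Z - 1%N%:Z)) => //.
- by rewrite !inE eqxx.
- by rewrite !inE eqxx orbT.
- by move=> S _ _ _; apply: X3.
- move=> S eS fS wS.
  case: (boolP ((A \subset S :\ e :\ f) && (S :\ e :\ f \subset A))).
    rewrite -eqEsubset => /eqP SA; move: Hn; suff -> : f |: A = S by rewrite wS.
    apply/setP => c; rewrite SA !inE; case: eqVneq => [->|] //=.
    by move=> _; case: eqVneq => [->|] //=; rewrite (negbTE eS).
  rewrite negb_and => /orP [/subsetPn [a0 aA aS]|/subsetPn [b0 bS bA]].
    exact: X2a aA aS.
  exact: X2b (subxx A) bS bA.
- rewrite T1E T2E X1 // setDv cards0; lia.
Qed.

Lemma I_rule (A B : {set E}) : 0 < w A -> 0 < w B -> A \subset B -> A != B ->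
  exists2 c, c \in B :\: A & 0 < w (c |: A).
Proof.
move=> wA wB AB nAB.
case: (boolP [exists c in B :\: A, 0 < w (c |: A)]) => [/exists_inP [c] cBA wc|Hn].
  by exists c.
exfalso.
have HnA : forall c, c \in B :\: A -> ~~ (0 < w (c |: A)).
  by move=> c cBA; apply: contra Hn => Hc; apply/exists_inP; exists c.
pose P (S : {set E}) := [&& A \proper S, S \subset B & 0 < w S].
have PB : P B by rewrite /P properEneq nAB AB wB subxx.
case: (arg_minnP (fun S : {set E} => #|S|) PB) => S /and3P [AS SB wS] Smin.
have [ASs [c cS cA]] := properP AS.
have cSA : c \in S :\: A by rewrite inE cS cA.
have cB : c \in B by apply: (subsetP SB).
case: (eqVneq (S :\: A :\ c) set0) => [E0|/set0Pn [d]].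
  have SE : S = c |: A.
    apply/setP => z; move/setP: E0 => /(_ z); rewrite !inE.
    case zA: (z \in A); first by rewrite orbT (subsetP ASs).
    by case: eqVneq => [->|] //=; rewrite cS.
  by move: (HnA c); rewrite inE cB cA -SE wS => /(_ isT).
rewrite !inE => /and3P [dc dA dS].
have cd : c != d by rewrite eq_sym.
set k := #|S :\: A|.
have Hgen : forall g h (T : {set E}), g \in S :\: A -> h \in S :\: A -> g != h ->
    g \in T -> h \notin T -> 0 < w T ->
    \sum_(z in T :\ g :\ h) xw A B k z <= (k * #|A|)%N%:Z - k%:Z + 1.
  move=> g h T gSA hSA gh gT hT wT.
  case: (boolP ((A \subset T :\ g :\ h) && (T :\ g :\ h \subset B))) => [/andP [AT' T'B]|].
    rewrite X1 //.
    have ATs : A \subset T.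
      by apply: (subset_trans AT'); apply/subsetP => z; rewrite !inE => /andP [_ /andP [_ ->]].
    have gA : g \notin A by move: gSA; rewrite inE => /andP [].
    have gB : g \in B by move: gSA; rewrite inE => /andP [_ /(subsetP SB)].
    have PT : P T.
      rewrite /P wT andbT; apply/andP; split.
        by apply/properP; split => //; exists g.
      apply/subsetP => z zT; case: (eqVneq z g) => [->//|zg].
      apply: (subsetP T'B); rewrite !inE zg zT andbT.
      by rewrite ?andbT; apply/eqP => zh; move: hT; rewrite -zh zT.
    have := Smin T PT => ST.
    apply: (@ar_he k #|A| #|T| #|S| _ (subset_leq_card ASs) (subset_leq_card ATs) _ ST).
      by rewrite /k cardsD (setIidPr ASs).
    have -> : T :\ g :\ h :\: A = (T :\: A) :\ g.
      apply/setP => z; rewrite !inE; case: (eqVneq z h) => [->|] /=.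
        by rewrite (negbTE hT) !andbF.
      by move=> _; case: (z \in A); case: (z == g).
    move: (cardsD1 g (T :\: A)); rewrite inE gA gT /= cardsD (setIidPr ATs).
    exact: ar_c.
  rewrite negb_and => /orP [/subsetPn [a0 aA aT]|/subsetPn [b0 bT bB]].
    exact: le_trans (X2a B k aA aT) (ar_x2 _ _).
  exact: le_trans (X2b k AB bT bB) (ar_x2 _ _).
have dSA : d \in S :\: A by rewrite inE dA dS.
apply: (core Hw Hray cd (x := xw A B k) (T1 := A) (T2 := S)
   (qe := (k * #|A|)%N%:Z - k%:Z + 1) (qf := (k * #|A|)%N%:Z - k%:Z + 1)) => //.
- by move=> T cT dT wT; exact: Hgen.
- by move=> T cT dT wT; rewrite setDDC; apply: Hgen => //; rewrite eq_sym.
have SA' : A \subset S :\ c :\ d.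
  apply/subsetP => z zA; rewrite !inE (subsetP ASs) // andbT.
  by apply/andP; split; [apply: contraNneq dA => <- | apply: contraNneq cA => <-].
have S'B : S :\ c :\ d \subset B.
  by apply/subsetP => z; rewrite !inE => /andP [_ /andP [_ /(subsetP SB)]].
have A3 : A :\ c :\ d = A by rewrite (setD_notin (a:=c)) // setD_notin.
rewrite A3 X1 // X1 // setDv cards0.
apply: ar_lt.
  rewrite /k (cardsD1 c) cSA (cardsD1 d) !inE dc dA dS /=.
  by rewrite !add1n.
have -> : S :\ c :\ d :\: A = (S :\: A) :\ c :\ d.
  by apply/setP => z; rewrite !inE; case: (z == c); case: (z == d); case: (z \in A).
rewrite /k (cardsD1 c (S :\: A)) cSA (cardsD1 d (S :\: A :\ c)) !inE dc dA dS /=.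
by rewrite !add1n !subSS subn0.
Qed.

Lemma interval n : forall A B : {set E}, #|B :\: A| = n -> A \subset B ->
  0 < w A -> 0 < w B -> forall S : {set E}, A \subset S -> S \subset B -> 0 < w S.
Proof.
elim: n => [|n IH] A B hn AB wA wB S AS SB.
  have BA : B \subset A by rewrite -setD_eq0 -cards_eq0 hn.
  suff -> : S = A by [].
  by apply/eqP; rewrite eqEsubset AS andbT (subset_trans SB BA).
have nAB : A != B.
  by apply/eqP => AB'; move: hn; rewrite AB' setDv cards0.
have [c cBA wc] := I_rule wA wB AB nAB.
move: (cBA); rewrite inE => /andP [cA cB].
have cAB : c |: A \subset B by rewrite subUset sub1set cB AB.
have IH1 : forall S : {set E}, c |: A \subset S -> S \subset B -> 0 < w S.
  apply: IH => //.
  have -> : B :\: (c |: A) = (B :\: A) :\ c.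
    by apply/setP => z; rewrite !inE negb_or andbA.
  by move: hn; rewrite (cardsD1 c (B :\: A)) cBA add1n => [[]].
suff H : forall m (S : {set E}), #|S :\: A| = m -> A \subset S -> S \subset B -> c \notin S -> 0 < w S.
  case: (boolP (c \in S)) => cS.
    by apply: IH1 SB; rewrite subUset sub1set cS AS.
  exact: H _ S erefl AS SB cS.
elim=> [|m IHm] S' hm AS' S'B cS'.
  have S'A : S' \subset A by rewrite -setD_eq0 -cards_eq0 hm.
  suff -> : S' = A by [].
  by apply/eqP; rewrite eqEsubset S'A AS'.
have [f fSA] : exists f, f \in S' :\: A by apply/card_gt0P; rewrite hm.
move: (fSA); rewrite inE => /andP [fA fS].
have cf : c != f by apply/eqP => cf; move: cS'; rewrite cf fS.
have wS'' : 0 < w (S' :\ f).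
  apply: IHm.
  - have -> : (S' :\ f) :\: A = (S' :\: A) :\ f.
      by apply/setP => z; rewrite !inE; case: (z == f); case: (z \in A).
    by move: hm; rewrite (cardsD1 f (S' :\: A)) fSA add1n => [[]].
  - apply/subsetP => z zA; rewrite !inE (subsetP AS') // andbT.
    by apply/eqP => zf; move: fA; rewrite -zf zA.
  - by apply/subsetP => z; rewrite inE => /andP [_ /(subsetP S'B)].
  - by rewrite inE negb_and cS' orbT.
have := L_rule (A := S' :\ f) cf _ _ wS''.
rewrite setD1K // => -> //.
- by rewrite inE negb_and cS' orbT.
- by rewrite setD11.
apply: IH1; first by rewrite setUS.
by rewrite subUset sub1set cB S'B.
Qed.
End Main.

Unset Implicit Arguments.
Theorem theorem4p2 (R : realType) (E : finType) (Q : {set {set E}}) :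
  weakly_rayleigh R Q -> set0 \in Q -> [set: E] \in Q -> Q = [set: {set E}].
Proof.
move=> [w [Hw _ HQ Hray]] Q0 QE.
apply/setP => S; rewrite inE; apply/HQ.
apply: (interval Hw Hray (n := #|[set: E] :\: set0|) (A := set0) (B := [set: E]) erefl
  (sub0set _) _ _ (sub0set S) (subsetT S)); by apply/HQ.
Qed.
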